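(* Let $p>2$ be an integer and $\theta\in(0,1)$. For $\bm q\in\mathbb S^{n-1}$ let $\rho=\tfrac12\min_{1\le i\le n}\min\{\|\bm q-\bm e_i\|_2^2,\|\bm q+\bm e_i\|_2^2\}$. Then $$\rho\le\frac{C_p}{\theta(1-\theta)}\Big(\theta-\mathbb E_\Omega\|\bm q_\Omega\|_2^p\Big),\qquad C_p=\big(1-2(0.5)^{p/2}\big)^{-1}.$$
   Context: $\bm e_i$ are the standard basis vectors of $\mathbb R^n$. $\Omega$ denotes a random subset of $\{1,\dots,n\}$ in which each index is included independently with probability $\theta$ (the support of a vector with i.i.d. $\mathrm{Ber}(\theta)$ entries), and $\bm q_\Omega$ is the subvector of $\bm q$ with entries indexed by $\Omega$ (so $\|\bm q_\emptyset\|_2=0$). *)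

(* Defs.v *)
From HB Require Import structures.
From mathcomp Require Import all_boot all_order all_algebra.
Set Implicit Arguments. Unset Strict Implicit. Unset Printing Implicit Defensive.
Import Order.TTheory GRing.Theory Num.Theory.
Local Open Scope ring_scope.

Definition sqnorm (R : rcfType) (n : nat) (v : 'rV[R]_n) : R :=
  \sum_(j < n) v 0 j ^+ 2.

Definition ebasis (R : rcfType) (n : nat) (i : 'I_n) : 'rV[R]_n :=
  \row_(j < n) (i == j)%:R.

Definition dist_i (R : rcfType) (n : nat) (q : 'rV[R]_n) (i : 'I_n) : R :=
  Num.min (sqnorm (q - ebasis R i)) (sqnorm (q + ebasis R i)).

(* rho = 1/2 min_i d_i(q), dimension n.+1 >= 1 (the sphere S^{n} is nonempty) *)
Definition rho (R : rcfType) (n : nat) (q : 'rV[R]_n.+1) : R :=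
  2^-1 * \big[Num.min/dist_i q ord0]_(i < n.+1) dist_i q i.

Definition subnorm (R : rcfType) (n : nat) (q : 'rV[R]_n) (S : {set 'I_n}) : R :=
  Num.sqrt (\sum_(i in S) q 0 i ^+ 2).

(* E_Omega ||q_Omega||_2^p, Omega ~ i.i.d. Bernoulli(theta) support *)
Definition expect_pow (R : rcfType) (n : nat) (theta : R) (p : nat)
    (q : 'rV[R]_n) : R :=
  \sum_(S : {set 'I_n})
     theta ^+ #|S| * (1 - theta) ^+ (n - #|S|) * subnorm q S ^+ p.

(* C_p = (1 - 2 (0.5)^{p/2})^{-1}, with (0.5)^{p/2} = (sqrt(1/2))^p *)
Definition Cp (R : rcfType) (p : nat) : R :=
  (1 - 2 * (Num.sqrt (2^-1 : R)) ^+ p)^-1.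

(* Main.v *)
Require Import Defs.
From HB Require Import structures.
From mathcomp Require Import all_boot all_order all_algebra.
From mathcomp Require Import ring lra.
Import Order.TTheory GRing.Theory Num.Theory.
Local Open Scope ring_scope.

Section P1.
Variable R : rcfType.
Lemma a_facts : let a := Num.sqrt (2^-1 : R) in 0 <= a /\ a ^+ 2 = 2^-1 /\ 2^-1 <= a /\ a < 1.
Proof.
move=> a; have a0 : 0 <= a by apply: sqrtr_ge0.
have a2 : a ^+ 2 = 2^-1 by rewrite sqr_sqrtr // invr_ge0 ler0n.
have h2 : (2^-1 : R) * 2 = 1 by rewrite mulVf // pnatr_eq0.
split=> //; split=> //; split; nra.
Qed.

Lemma c_pos (p : nat) : (2 < p)%N -> 0 < 1 - 2 * Num.sqrt (2^-1 : R) ^+ p.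
Proof.
move=> hp; have [a0 [a2 [ah a1]]] := a_facts.
set a := Num.sqrt _ in a0 a2 ah a1 *.
have h2 : (2^-1 : R) * 2 = 1 by rewrite mulVf // pnatr_eq0.
have -> : p = (p - 2).+2 by rewrite -addn2 subnK // ltnW.
rewrite exprSr exprSr -mulrA -expr2 a2.
have : a ^+ (p - 2) <= a by rewrite -{2}(expr1 a) ler_wiXn2l // ?ltW // subn_gt0.
nra.
Qed.

Lemma pointwise (p : nat) (t : R) : (2 < p)%N -> 0 <= t -> t <= 1 ->
  (1 - 2 * Num.sqrt (2^-1 : R) ^+ p) * (t^+2 * (1 - t^+2)) <= t ^+ 2 - t ^+ p.
Proof.
move=> hp t0 t1; have [a0 [a2 [ah a1]]] := a_facts.
set a := Num.sqrt _ in a0 a2 ah a1 *.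
have h2 : (2^-1 : R) * 2 = 1 by rewrite mulVf // pnatr_eq0.
have [k ->] : exists k, p = k.+3 by exists (p - 3)%N; rewrite -addn3 subnK.
have -> : 2 * a ^+ k.+3 = a ^+ k.+1 by rewrite exprSr exprSr -mulrA -expr2 a2; lra.
have -> : t ^+ k.+3 = t ^+ 2 * t ^+ k.+1 by rewrite -exprD.
have ak0 : 0 <= a ^+ k.+1 by apply: exprn_ge0.
have tk0 : 0 <= t ^+ k.+1 by apply: exprn_ge0.
have t20 : 0 <= t ^+ 2 by apply: exprn_ge0.
case: k ak0 tk0 => [|k] ak0 tk0.
  rewrite !expr1.
  have : 0 <= (1 - t) * (1 - (1 - a) * (1 + t)) by apply: mulr_ge0; nra.
  move=> h; rewrite expr2; nra.
have htk : t ^+ k.+2 <= t ^+ 2 by rewrite ler_wiXn2l.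
have hak : a ^+ k.+2 <= 1 by rewrite exprn_ile1 // ltW.
have : 0 <= t ^+ 2 * ((1 - t ^+ k.+2) - (1 - a ^+ k.+2) * (1 - t^+2)).
  apply: mulr_ge0 => //; have : t ^+ 2 <= 1 by rewrite exprn_ile1.
  nra.
nra.
Qed.
End P1.
Section P.
Variable R : rcfType.
Variable N : nat.
Variable th : R.
Definition w (S : {set 'I_N}) := th ^+ #|S| * (1 - th) ^+ (N - #|S|).

Lemma w_prod (S : {set 'I_N}) : \prod_k (if k \in S then th else 1 - th) = w S.
Proof.
rewrite (bigID (mem S)) /=.
rewrite [X in X * _](eq_bigr (fun _ => th)); last by move=> k ->.
rewrite [X in _ * X](eq_bigr (fun _ => 1 - th)); last by move=> k hk; rewrite (negbTE hk).
rewrite !prodr_const /w; congr (_ * _ ^+ _).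
have h := cardC (mem S); rewrite card_ord in h.
have h' : (N - #|S| = #|[predC S]|)%N.
  by move: h; move: (#|S|) (#|[predC S]|) => a b /esym ->; rewrite addKn.
rewrite h'; apply: eq_card => k; by rewrite !inE.
Qed.

Lemma prod_bool (b : 'I_N -> bool) : \prod_k (b k)%:R = [forall k, b k]%:R :> R.
Proof.
case: (boolP [forall k, b k]) => [/forallP h | ].
  by rewrite big1 // => k _; rewrite h.
by rewrite negb_forall => /existsP [k hk]; rewrite (bigD1 k) //= (negbTE hk) mul0r.
Qed.

Lemma prob_gen (u v : 'I_N -> bool) :
  \sum_(S : {set 'I_N}) w S * [forall k, if k \in S then u k else v k]%:R
  = \prod_k ((u k)%:R * th + (v k)%:R * (1 - th)).
Proof.
rewrite bigA_distr; apply: eq_big => // S.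
rewrite (eq_bigr (fun k => (if k \in S then u k else v k)%:R * (if k \in S then th else 1 - th))); last by move=> k _; case: (k \in S).
by rewrite big_split /= w_prod prod_bool mulrC.
Qed.

Lemma marg (i : 'I_N) : \sum_(S : {set 'I_N}) w S * (i \in S)%:R = th.
Proof.
transitivity (\sum_(S : {set 'I_N}) w S * [forall k, if k \in S then true else k != i]%:R).
  apply: eq_bigr => S _; congr (_ * (nat_of_bool _)%:R).
  apply/idP/idP => [hi|/forallP h]; first by apply/forallP => k; case: ifP => // hk; apply/eqP => e; rewrite e hi in hk.
  by have := h i; case: ifP => // _; rewrite eqxx.
rewrite prob_gen (bigD1 i) //= eqxx /= mul0r addr0 mul1r big1 ?mulr1 // => k hk.
by rewrite hk /=; lra.
Qed.

Lemma pairp (i j : 'I_N) :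
  \sum_(S : {set 'I_N}) w S * ((i \in S) && (j \notin S))%:R = (i != j)%:R * (th * (1 - th)).
Proof.
transitivity (\sum_(S : {set 'I_N}) w S * [forall k, if k \in S then k != j else k != i]%:R).
  apply: eq_bigr => S _; congr (_ * (nat_of_bool _)%:R).
  apply/andP/idP => [[hi hj] | /forallP h].
    apply/forallP => k; case: ifP => hk; apply/eqP => e; first by rewrite -e hk in hj.
    by rewrite e hi in hk.
  split.
    by have := h i; case: ifP => // _; rewrite eqxx.
  by apply/negP => hj; have := h j; rewrite hj eqxx.
rewrite prob_gen; case: (eqVneq i j) => [<-|hij].
  by rewrite (bigD1 i) //= eqxx /= !mulr0n !mul0r addr0 mul0r.
rewrite (bigD1 i) //= (bigD1 j) /=; last by rewrite eq_sym.
have hji : j != i by rewrite eq_sym.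
rewrite hij hji !eqxx /= big1 ?mulr1.
  by rewrite !mulr0n !mulr1n !mul1r !mul0r add0r addr0.
move=> k /andP [hki hkj]; rewrite hki hkj /=; lra.
Qed.
End P.
Arguments w {R N}.
Arguments marg {R N}.
Arguments pairp {R N}.

Lemma nb (R : rcfType) (b : bool) : (b%:R : R) = if b then 1 else 0.
Proof. by case: b. Qed.

Theorem mainTheorem7 (R : rcfType) (p : nat) (theta : R) (n : nat)
    (q : 'rV[R]_n.+1) :
  (2 < p)%N -> 0 < theta -> theta < 1 -> sqnorm q = 1 ->
  rho q <= Cp R p / (theta * (1 - theta)) * (theta - expect_pow theta p q).
Proof.
move=> hp th0 th1 hq.
pose x k := q 0 k ^+ 2.
have x0 : forall k, 0 <= x k by move=> k; apply: sqr_ge0.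
have hx1 : \sum_k x k = 1 by [].
pose s (S : {set 'I_n.+1}) := \sum_k x k * (k \in S)%:R.
have sE : forall S : {set 'I_n.+1}, \sum_(i in S) q 0 i ^+ 2 = s S.
  move=> S; rewrite big_mkcond; apply: eq_bigr => k _.
  by rewrite nb; case: (k \in S); rewrite ?mulr1 ?mulr0.
have s0 : forall S : {set 'I_n.+1}, 0 <= s S.
  by move=> S; apply: sumr_ge0 => k _; rewrite nb; case: (k \in S); rewrite ?mulr1 ?mulr0.
have s1 : forall S : {set 'I_n.+1}, s S <= 1.
  move=> S; rewrite -hx1; apply: ler_sum => k _.
  by rewrite nb; case: (k \in S); rewrite ?mulr1 ?mulr0.
have cS : forall S : {set 'I_n.+1}, 1 - s S = \sum_k x k * (k \notin S)%:R.
  move=> S; rewrite -[in LHS]hx1 -sumrB; apply: eq_bigr => k _.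
  by rewrite !nb; case: (k \in S); rewrite /= ?mulr1 ?mulr0 ?subrr ?subr0.
have wge0 : forall S : {set 'I_n.+1}, 0 <= w theta S.
  by move=> S; apply: mulr_ge0; apply: exprn_ge0; lra.
have Eexp : expect_pow theta p q = \sum_(S : {set 'I_n.+1}) w theta S * Num.sqrt (s S) ^+ p.
  by apply: eq_bigr => S _; rewrite /subnorm sE.
have hA : \sum_(S : {set 'I_n.+1}) w theta S * s S = theta.
  transitivity (\sum_(S : {set 'I_n.+1}) \sum_k x k * (w theta S * (k \in S)%:R)).
    by apply: eq_bigr => S _; rewrite /s mulr_sumr; apply: eq_bigr => k _; rewrite mulrCA.
  rewrite exchange_big /=; transitivity (\sum_k x k * theta).
    by apply: eq_bigr => k _; rewrite -mulr_sumr marg.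
  by rewrite -mulr_suml hx1 mul1r.
have hB : \sum_(S : {set 'I_n.+1}) w theta S * (s S * (1 - s S)) = theta * (1 - theta) * (1 - \sum_k x k ^+ 2).
  transitivity (\sum_(S : {set 'I_n.+1}) \sum_i \sum_j x i * x j * (w theta S * ((i \in S) && (j \notin S))%:R)).
    apply: eq_bigr => S _; rewrite cS /s mulr_suml mulr_sumr; apply: eq_bigr => i _.
    rewrite mulr_sumr mulr_sumr; apply: eq_bigr => j _.
    rewrite !nb; case: (i \in S); case: (j \in S); rewrite /=; ring.
  transitivity (\sum_i \sum_j x i * x j * ((i != j)%:R * (theta * (1 - theta)))).
    rewrite exchange_big; apply: eq_bigr => i _; rewrite exchange_big; apply: eq_bigr => j _.
    by rewrite -mulr_sumr pairp.
  transitivity (theta * (1 - theta) * \sum_i (x i - x i ^+ 2)); last by rewrite sumrB hx1.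
  rewrite mulr_sumr; apply: eq_bigr => i _.
  have h : \sum_j x j * (i != j)%:R = 1 - x i.
    rewrite -[X in _ = X - _]hx1 (bigD1 i) //= [X in _ = X - _](bigD1 i) //= eqxx /= mulr0n mulr0 add0r.
    rewrite [_ + _ - _]addrC addKr; apply: eq_bigr => j hj.
    by rewrite eq_sym hj /= mulr1n mulr1.
  transitivity (x i * (\sum_j x j * (i != j)%:R) * (theta * (1 - theta))).
    by rewrite mulr_sumr mulr_suml; apply: eq_bigr => j _; ring.
  rewrite h; ring.
set c := 1 - 2 * Num.sqrt (2^-1 : R) ^+ p.
have hc : 0 < c by apply: c_pos.
have hC : c * (theta * (1 - theta) * (1 - \sum_k x k ^+ 2)) <= theta - expect_pow theta p q.
  rewrite Eexp -[X in _ <= X - _]hA -sumrB -hB mulr_sumr; apply: ler_sum => S _.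
  rewrite -mulrBr mulrCA; apply: ler_wpM2l => //.
  have t1 : Num.sqrt (s S) <= 1 by rewrite -sqrtr1 ler_sqrt.
  have := @pointwise R p (Num.sqrt (s S)) hp (sqrtr_ge0 (s S)) t1.
  by rewrite sqr_sqrtr.
have hD : rho q <= 1 - \sum_k x k ^+ 2.
  have [j hj] : exists j, forall i, x i <= x j.
    case: (@arg_maxP _ _ 'I_n.+1 ord0 predT x isT) => j _ h; by exists j => i; apply: h.
  have xj1 : x j <= 1.
    by rewrite -hx1 (bigD1 j) //= lerDl sumr_ge0.
  have sum4 : \sum_k x k ^+ 2 <= x j.
    apply: (@le_trans _ _ (\sum_k x k * x j)).
      by apply: ler_sum => k _; rewrite expr2 ler_wpM2l.
    by rewrite -mulr_suml hx1 mul1r.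
  have gen : forall e : R, e ^+ 2 = 1 ->
      \sum_k (q 0 k + e * (j == k)%:R) ^+ 2 = 1 + 2 * e * q 0 j + 1.
    move=> e he.
    transitivity (\sum_k (x k + (2 * e * q 0 k + 1) * (j == k)%:R)).
      apply: eq_bigr => k _; rewrite nb; case: (j == k); rewrite ?mulr1 ?mulr0 ?addr0 //.
      have -> : (q 0 k + e) ^+ 2 = q 0 k ^+ 2 + 2 * e * q 0 k + e ^+ 2 by ring.
      by rewrite he addrA.
    rewrite big_split /= hx1 (bigD1 j) //= eqxx mulr1 big1 ?addr0 ?addrA // => k hk.
    by rewrite eq_sym (negbTE hk) mulr0.
  have d1 : sqnorm (q - ebasis R j) = 1 + 2 * (-1) * q 0 j + 1.
    rewrite -gen ?sqrrN ?expr1n //; apply: eq_bigr => k _.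
    by rewrite /ebasis !mxE mulN1r.
  have d2 : sqnorm (q + ebasis R j) = 1 + 2 * 1 * q 0 j + 1.
    rewrite -gen ?expr1n //; apply: eq_bigr => k _.
    by rewrite /ebasis !mxE mul1r.
  have hr : rho q <= 2^-1 * dist_i q j.
    by rewrite /rho ler_wpM2l ?invr_ge0 ?ler0n // bigmin_le.
  have h2 : (2^-1 : R) * 2 = 1 by rewrite mulVf // pnatr_eq0.
  have hr1 : rho q <= 2^-1 * (1 + 2 * (-1) * q 0 j + 1).
    apply: (le_trans hr); rewrite ler_wpM2l ?invr_ge0 ?ler0n //.
    by rewrite /dist_i -d1 ge_min lexx.
  have hr2 : rho q <= 2^-1 * (1 + 2 * 1 * q 0 j + 1).
    apply: (le_trans hr); rewrite ler_wpM2l ?invr_ge0 ?ler0n //.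
    by rewrite /dist_i -d2 ge_min lexx orbT.
  have xjE : x j = q 0 j ^+ 2 by [].
  rewrite xjE in sum4 xj1.
  set y := q 0 j in hr1 hr2 sum4 xj1.
  set Sg := \sum_k x k ^+ 2 in sum4 *.
  set r := rho q in hr1 hr2 *.
  have e1 : r <= 1 - y by lra.
  have e2 : r <= 1 + y by lra.
  case: (lerP 0 y) => hy.
    have : y <= 1 by nra.
    nra.
  have : -1 <= y by nra.
  nra.
rewrite /Cp -/c.
have ht : 0 < theta * (1 - theta) by apply: mulr_gt0; lra.
have -> : c^-1 / (theta * (1 - theta)) * (theta - expect_pow theta p q)
    = (theta - expect_pow theta p q) / (c * (theta * (1 - theta))).
  by rewrite [RHS]mulrC [in RHS]invfM.
rewrite ler_pdivlMr; last exact: mulr_gt0.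
set D := theta - _ in hC *; set t := theta * _ in ht hC *.
set Sg := \sum_k _ in hC hD.
have := ler_wpM2r (ltW (mulr_gt0 hc ht)) hD.
nra.
Qed.
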